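(* Let $H_0,H_1$ be complex Hilbert spaces, $G$ a densely defined closed operator from $H_0$ into $H_1$ and $D$ a densely defined closed operator from $H_1$ into $H_0$ with $-G^*\subset D$. Let $m\in\mathcal L(H_0)$ (not necessarily coercive) and let $a\in\mathcal L(H_1)$ be coercive. Let $T\in\mathcal L(\mathrm{dom}(G))$ be defined by $(Tu,v)_{\mathrm{dom}(G)}=(aGu,Gv)_{H_1}+(mu,v)_{H_0}$ for all $u,v\in\mathrm{dom}(G)$, and assume $\mathrm{ran}(T)$ is closed in $\mathrm{dom}(G)$. Then the Dirichlet-to-Neumann graph $\Lambda$ associated with $-DaG+m$ satisfies \[ \mathrm{dom}(\Lambda^{-1})=\{q_0\in\mathrm{BD}(D):(Dq_0,\pi_{\mathrm{BD}(G)}v)_{\mathrm{BD}(G)}=0\text{ for all }v\in\ker(m^*-\mathring Da^*G)\}. \]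
   Context: $\mathring D=-G^*$, $\mathring G=-D^*$. Domains carry graph inner products, e.g. $(u,v)_{\mathrm{dom}(G)}=(u,v)_{H_0}+(Gu,Gv)_{H_1}$. $\mathrm{BD}(G)$ (resp. $\mathrm{BD}(D)$) is the orthogonal complement of $\mathrm{dom}(\mathring G)$ in $\mathrm{dom}(G)$ (resp. of $\mathrm{dom}(\mathring D)$ in $\mathrm{dom}(D)$) with induced inner products; $\pi_{\mathrm{BD}(G)},\pi_{\mathrm{BD}(D)}$ the orthogonal projections. $D$ maps $\mathrm{BD}(D)$ into $\mathrm{BD}(G)$. Coercive: $\mathrm{Re}(ax,x)\ge\mu\|x\|^2$ for some $\mu>0$. The Dirichlet-to-Neumann graph is $\Lambda=\{(\pi_{\mathrm{BD}(G)}u,\pi_{\mathrm{BD}(D)}aGu): u\in\mathrm{dom}(G),\ aGu\in\mathrm{dom}(D),\ mu-DaGu=0\}$; its inverse graph is $\Lambda^{-1}=\{(q,p):(p,q)\in\Lambda\}$ and $\mathrm{dom}(\Lambda^{-1})$ the set of its first components. $\ker(m^*-\mathring Da^*G)=\{v\in\mathrm{dom}(G):a^*Gv\in\mathrm{dom}(\mathring D),\ m^*v=\mathring Da^*Gv\}$. *)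

(* Defs.v *)
From HB Require Import structures.
From mathcomp Require Import all_boot all_order all_algebra.
From mathcomp Require Import classical_sets reals.
From mathcomp Require Import complex.
Set Implicit Arguments. Unset Strict Implicit. Unset Printing Implicit Defensive.
Import Order.TTheory GRing.Theory Num.Theory.
Local Open Scope ring_scope.
Local Open Scope classical_set_scope.

(* Scalars: the complex numbers R[i] over a real field R : realType.
   Inner products are linear in the first and conjugate-linear in the second
   argument. *)

Definition is_inner_product (R : realType) (V : lmodType R[i])
    (ip : V -> V -> R[i]) : Prop :=
  [/\ (forall (a : R[i]) (x y z : V), ip (a *: x + y) z = a * ip x z + ip y z),
      (forall x y : V, ip y x = conjc (ip x y)) &
      (forall x : V, x != 0 -> 0 < complex.Re (ip x x))].

Definition ipnorm (R : realType) (V : lmodType R[i]) (ip : V -> V -> R[i])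
    (x : V) : R := Num.sqrt (complex.Re (ip x x)).

Definition cvg_to (R : realType) (V : lmodType R[i]) (ip : V -> V -> R[i])
    (u : nat -> V) (x : V) : Prop :=
  forall eps : R, 0 < eps -> exists N : nat,
    forall n : nat, (N <= n)%N -> ipnorm ip (u n - x) < eps.

Definition cauchy_seq (R : realType) (V : lmodType R[i]) (ip : V -> V -> R[i])
    (u : nat -> V) : Prop :=
  forall eps : R, 0 < eps -> exists N : nat,
    forall n m : nat, (N <= n)%N -> (N <= m)%N -> ipnorm ip (u n - u m) < eps.

Definition is_hilbert (R : realType) (V : lmodType R[i]) (ip : V -> V -> R[i])
    : Prop :=
  is_inner_product ip /\
  (forall u : nat -> V, cauchy_seq ip u -> exists x : V, cvg_to ip u x).

(* An (unbounded) operator A from V to W with domain dom : set V;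
   the values of A outside dom are irrelevant. *)
Definition linear_op (R : realType) (V W : lmodType R[i])
    (dom : set V) (A : V -> W) : Prop :=
  dom 0 /\
  (forall (a : R[i]) (x y : V), dom x -> dom y ->
     dom (a *: x + y) /\ A (a *: x + y) = a *: A x + A y).

Definition densely_defined (R : realType) (V : lmodType R[i])
    (ipV : V -> V -> R[i]) (dom : set V) : Prop :=
  forall (x : V) (eps : R), 0 < eps -> exists y : V, dom y /\ ipnorm ipV (x - y) < eps.

Definition closed_op (R : realType) (V W : lmodType R[i])
    (ipV : V -> V -> R[i]) (ipW : W -> W -> R[i]) (dom : set V) (A : V -> W)
    : Prop :=
  forall (u : nat -> V) (x : V) (y : W),
    (forall n, dom (u n)) -> cvg_to ipV u x -> cvg_to ipW (fun n => A (u n)) y ->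
    dom x /\ A x = y.

Definition adjoint_graph (R : realType) (V W : lmodType R[i])
    (ipV : V -> V -> R[i]) (ipW : W -> W -> R[i]) (dom : set V) (A : V -> W)
    : set (W * V) :=
  [set p | forall x : V, dom x -> ipW (A x) p.1 = ipV x p.2].

Definition adjoint_dom (R : realType) (V W : lmodType R[i])
    (ipV : V -> V -> R[i]) (ipW : W -> W -> R[i]) (dom : set V) (A : V -> W)
    : set W :=
  [set y | exists z : V, adjoint_graph ipV ipW dom A (y, z)].

Definition bounded_op (R : realType) (V : lmodType R[i]) (ip : V -> V -> R[i])
    (A : V -> V) : Prop :=
  (forall (a : R[i]) (x y : V), A (a *: x + y) = a *: A x + A y) /\
  (exists c : R, forall x : V, ipnorm ip (A x) <= c * ipnorm ip x).

Definition coercive (R : realType) (V : lmodType R[i]) (ip : V -> V -> R[i])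
    (A : V -> V) : Prop :=
  exists mu : R, 0 < mu /\
    forall x : V, mu * ipnorm ip x ^+ 2 <= complex.Re (ip (A x) x).

Definition graph_ip (R : realType) (V W : lmodType R[i])
    (ipV : V -> V -> R[i]) (ipW : W -> W -> R[i]) (A : V -> W) (u v : V) : R[i] :=
  ipV u v + ipW (A u) (A v).

(* BD(A) : orthogonal complement of dom0 (= dom of the "ring" operator)
   in dom(A), for the graph inner product *)
Definition BD (R : realType) (V W : lmodType R[i])
    (ipV : V -> V -> R[i]) (ipW : W -> W -> R[i]) (dom : set V) (A : V -> W)
    (dom0 : set V) : set V :=
  [set u | dom u /\ forall w : V, dom0 w -> graph_ip ipV ipW A u w = 0].

Definition is_orth_proj (R : realType) (V : lmodType R[i]) (ip : V -> V -> R[i])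
    (S : set V) (u p : V) : Prop :=
  S p /\ forall s : V, S s -> ip (u - p) s = 0.

(* The Dirichlet-to-Neumann graph associated with -DaG+m.
   dom(ring G) = dom(-D^* ) = adjoint_dom D,  dom(ring D) = dom(-G^* ) = adjoint_dom G. *)
Definition BDG (R : realType) (H0 H1 : lmodType R[i])
    (ip0 : H0 -> H0 -> R[i]) (ip1 : H1 -> H1 -> R[i])
    (domG : set H0) (G : H0 -> H1) (domD : set H1) (D : H1 -> H0) : set H0 :=
  BD ip0 ip1 domG G (adjoint_dom ip1 ip0 domD D).

Definition BDD (R : realType) (H0 H1 : lmodType R[i])
    (ip0 : H0 -> H0 -> R[i]) (ip1 : H1 -> H1 -> R[i])
    (domG : set H0) (G : H0 -> H1) (domD : set H1) (D : H1 -> H0) : set H1 :=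
  BD ip1 ip0 domD D (adjoint_dom ip0 ip1 domG G).

Definition DtN_graph (R : realType) (H0 H1 : lmodType R[i])
    (ip0 : H0 -> H0 -> R[i]) (ip1 : H1 -> H1 -> R[i])
    (domG : set H0) (G : H0 -> H1) (domD : set H1) (D : H1 -> H0)
    (a : H1 -> H1) (m : H0 -> H0) : set (H0 * H1) :=
  [set pq | exists u : H0,
     [/\ domG u, domD (a (G u)), m u - D (a (G u)) = 0,
         is_orth_proj (graph_ip ip0 ip1 G) (BDG ip0 ip1 domG G domD D) u pq.1 &
         is_orth_proj (graph_ip ip1 ip0 D) (BDD ip0 ip1 domG G domD D) (a (G u)) pq.2]].

Definition dom_inv (A B : Type) (L : set (A * B)) : set B :=
  [set q | exists p : A, L (p, q)].

(* ker(m^* - ring(D) a^* G), with ring(D) = -G^*, where mst = m^*, ast = a^* *)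
Definition ker_mstar (R : realType) (H0 H1 : lmodType R[i])
    (ip0 : H0 -> H0 -> R[i]) (ip1 : H1 -> H1 -> R[i])
    (domG : set H0) (G : H0 -> H1) (ast : H1 -> H1) (mst : H0 -> H0) : set H0 :=
  [set v | domG v /\ exists z : H0,
     adjoint_graph ip0 ip1 domG G (ast (G v), z) /\ mst v = - z].

(* Main.v *)
Require Import Defs.
From HB Require Import structures.
From mathcomp Require Import all_boot all_order all_algebra.
From mathcomp Require Import classical_sets reals.
From mathcomp Require Import complex.
From mathcomp Require Import ring lra zify.
From Stdlib Require ClassicalEpsilon.
Import Order.TTheory GRing.Theory Num.Theory.
Local Open Scope ring_scope.
Local Open Scope classical_set_scope.
Set Implicit Arguments. Unset Strict Implicit. Unset Printing Implicit Defensive.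

Notation cRe := complex.Re.
Notation cIm := complex.Im.

Section Cplx.
Variable R : realType.
Implicit Types x y : R[i].
Lemma ReM x y : cRe (x * y) = cRe x * cRe y - cIm x * cIm y.
Proof. by case: x => a b; case: y => c d. Qed.
Lemma ImM x y : cIm (x * y) = cRe x * cIm y + cIm x * cRe y.
Proof. case: x => a b; case: y => c d /=. by rewrite addrC. Qed.
Lemma ReD x y : cRe (x + y) = cRe x + cRe y.
Proof. by case: x => a b; case: y => c d. Qed.
Lemma ImD x y : cIm (x + y) = cIm x + cIm y.
Proof. by case: x => a b; case: y => c d. Qed.
Lemma ReN x : cRe (- x) = - cRe x. Proof. by case: x. Qed.
Lemma ImN x : cIm (- x) = - cIm x. Proof. by case: x. Qed.
Lemma ReJ x : cRe (conjc x) = cRe x. Proof. by case: x. Qed.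
Lemma ImJ x : cIm (conjc x) = - cIm x. Proof. by case: x. Qed.
Lemma Re0 : cRe (0 : R[i]) = 0. Proof. by []. Qed.
Lemma Im0 : cIm (0 : R[i]) = 0. Proof. by []. Qed.
Lemma Re1 : cRe (1 : R[i]) = 1. Proof. by []. Qed.
Lemma Im1 : cIm (1 : R[i]) = 0. Proof. by []. Qed.
Lemma ReC (r : R) : cRe (r%:C)%C = r. Proof. by []. Qed.
Lemma ImC (r : R) : cIm (r%:C)%C = 0. Proof. by []. Qed.
Lemma Rei : cRe ('i%C : R[i]) = 0. Proof. by []. Qed.
Lemma Imi : cIm ('i%C : R[i]) = 1. Proof. by []. Qed.
Lemma cE x y : cRe x = cRe y -> cIm x = cIm y -> x = y.
Proof. by case: x => a b; case: y => c d /= -> ->. Qed.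
Ltac cs := rewrite ?(ReD, ImD, ReN, ImN, ReM, ImM, ReJ, ImJ, Re0, Im0, Re1, Im1, ReC, ImC, Rei, Imi) /=.
Lemma conjcK' x : conjc (conjc x) = x.
Proof. by case: x => a b /=; rewrite opprK. Qed.
Lemma conjcD x y : conjc (x + y) = conjc x + conjc y.
Proof. apply: cE; cs; lra. Qed.
Lemma conjcN x : conjc (- x) = - conjc x.
Proof. apply: cE; cs; lra. Qed.
Lemma conjcM x y : conjc (x * y) = conjc x * conjc y.
Proof. apply: cE; cs; lra. Qed.
Lemma conjc0' : conjc (0 : R[i]) = 0. Proof. apply: cE; cs; lra. Qed.
Lemma conjc_eq0' x : conjc x = 0 -> x = 0.
Proof. by move=> h; rewrite -[x]conjcK' h conjc0'. Qed.
End Cplx.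
Ltac cs := rewrite ?(ReD, ImD, ReN, ImN, ReM, ImM, ReJ, ImJ, Re0, Im0, Re1, Im1, ReC, ImC, Rei, Imi) /=.


Section Sqrt.
Variable R : realType.
Lemma sqrt_lt (a e : R) : 0 < e -> (Num.sqrt a < e) = (a < e ^+ 2).
Proof.
move=> e0; case: (lerP a 0) => ha.
  rewrite ler0_sqrtr // e0; symmetry; apply: (le_lt_trans ha); exact: exprn_gt0.
rewrite -{1}(@ger0_norm _ e) ?ltW // -sqrtr_sqr ltr_sqrt //; exact: exprn_gt0.
Qed.
End Sqrt.

Definition sq (R : realType) (V : lmodType R[i]) (ip : V -> V -> R[i]) (x : V) : R := cRe (ip x x).

Section Cvg.
Variables (R : realType) (V : lmodType R[i]) (ip : V -> V -> R[i]).
Lemma cvgE u x : cvg_to ip u x <->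
  forall e : R, 0 < e -> exists N, forall n, (N <= n)%N -> sq ip (u n - x) < e.
Proof.
rewrite /cvg_to /ipnorm; split => h e he.
  have hs : 0 < Num.sqrt e by rewrite sqrtr_gt0.
  have [N hN] := h (Num.sqrt e) hs.
  exists N => n hn; have := hN n hn; by rewrite sqrt_lt ?sqr_sqrtr ?ltW.
have [N hN] := h (e ^+ 2) (exprn_gt0 2 he).
by exists N => n hn; rewrite sqrt_lt //; apply: hN.
Qed.
Lemma cauchyE u : cauchy_seq ip u <->
  forall e : R, 0 < e -> exists N, forall n m, (N <= n)%N -> (N <= m)%N -> sq ip (u n - u m) < e.
Proof.
rewrite /cauchy_seq /ipnorm; split => h e he.
  have hs : 0 < Num.sqrt e by rewrite sqrtr_gt0.
  have [N hN] := h (Num.sqrt e) hs.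
  exists N => n m hn hm; have := hN n m hn hm; by rewrite sqrt_lt ?sqr_sqrtr ?ltW.
have [N hN] := h (e ^+ 2) (exprn_gt0 2 he).
by exists N => n m hn hm; rewrite sqrt_lt //; apply: hN.
Qed.
End Cvg.
Section RealLemmas.
Variable R : realType.
Lemma quad (A B C : R) : 0 <= A -> 0 <= C ->
  (forall t, 0 <= t ^+ 2 * A + 2 * t * B + C) -> B ^+ 2 <= A * C.
Proof.
move=> hA hC h; case: (ltrP 0 A) => hA'.
  have := h (- B / A); set t := - B / A => ht.
  have htA : t * A = - B by rewrite /t mulfVK // gt_eqF.
  nra.
have A0 : A = 0 by apply/le_anti; rewrite hA' hA.
subst A; rewrite mul0r; case: (B =P 0) => [->|nB]; first by rewrite expr0n.
have := h (- (C + 1) / (2 * B)); set t := - (C + 1) / (2 * B) => ht.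
have htB : t * (2 * B) = - (C + 1) by rewrite /t mulfVK // mulf_neq0 // ?pnatr_eq0; apply/eqP.
nra.
Qed.

Lemma small_sq (r K : R) : 0 <= K -> (forall e, 0 < e -> r ^+ 2 <= e * K) -> r = 0.
Proof.
move=> hK h; have : r ^+ 2 <= 0.
  apply/ler_addgt0Pr => e he; rewrite add0r.
  have hK1 : 0 < K + 1 by lra.
  have := h (e / (K + 1)) (divr_gt0 he hK1) => h1.
  apply: (le_trans h1); rewrite mulrAC ler_pdivrMr //; nra.
move=> h2; apply/eqP; rewrite -sqrf_eq0; apply/eqP/le_anti; by rewrite h2 sqr_ge0.
Qed.
End RealLemmas.


Definition ieps (R : realType) (n : nat) : R := (n.+1%:R)^-1.
Lemma inv_le (R : realType) (N n : nat) : (N <= n)%N -> ieps R n <= ieps R N.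
Proof. by move=> h; rewrite lef_pV2 ?posrE ?ltr0Sn // ler_nat. Qed.
Lemma inv_gt0 (R : realType) (n : nat) : 0 < ieps R n.
Proof. by rewrite invr_gt0 ltr0Sn. Qed.
Lemma inv_le1 (R : realType) (n : nat) : ieps R n <= 1.
Proof. by rewrite invf_le1 ?ltr0Sn // ler1n. Qed.

Lemma two_mid (R : realType) (V : lmodType R[i]) (u v w : V) :
  (2%:C)%C *: (w - ((2^-1)%:C)%C *: (u + v)) = (w - u) + (w - v).
Proof.
rewrite scalerBr scalerA -rmorphM mulfV ?pnatr_eq0 // rmorph1 scale1r.
have -> : ((2 : R)%:C)%C = 1 + 1 by apply: cE; cs; lra.
by rewrite scalerDl scale1r opprD addrACA.
Qed.


Definition PH (R : realType) (V : lmodType R[i]) (ip : V -> V -> R[i]) (X : set V) : Prop :=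
 [/\ X 0, (forall a x y, X x -> X y -> X (a *: x + y)),
     (forall a x y z, X x -> X y -> X z -> ip (a *: x + y) z = a * ip x z + ip y z),
     (forall x y, X x -> X y -> ip y x = conjc (ip x y)) &
     (forall x, X x -> 0 <= cRe (ip x x))].
Definition Compl (R : realType) (V : lmodType R[i]) (ip : V -> V -> R[i]) (X : set V) : Prop :=
  forall u : nat -> V, (forall n, X (u n)) -> cauchy_seq ip u -> exists x, X x /\ cvg_to ip u x.
Definition Defn (R : realType) (V : lmodType R[i]) (ip : V -> V -> R[i]) (X : set V) : Prop :=
  forall x, X x -> cRe (ip x x) = 0 -> x = 0.

Section Gen.
Variables (R : realType) (V : lmodType R[i]) (ip : V -> V -> R[i]) (X : set V).
Hypothesis hPH : PH ip X.
Lemma X0 : X 0. Proof. by case: hPH. Qed.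
Lemma XL a x y : X x -> X y -> X (a *: x + y). Proof. by case: hPH => _ h _ _ _; apply: h. Qed.
Lemma XD x y : X x -> X y -> X (x + y).
Proof. by move=> hx hy; have := XL 1 hx hy; rewrite scale1r. Qed.
Lemma XZ a x : X x -> X (a *: x).
Proof. by move=> hx; have := XL a hx X0; rewrite addr0. Qed.
Lemma XN x : X x -> X (- x).
Proof. by move=> hx; have := XZ (-1) hx; rewrite scaleN1r. Qed.
Lemma XB x y : X x -> X y -> X (x - y).
Proof. by move=> hx hy; apply: XD => //; apply: XN. Qed.
Lemma ipL a x y z : X x -> X y -> X z -> ip (a *: x + y) z = a * ip x z + ip y z.
Proof. by case: hPH => _ _ h _ _; apply: h. Qed.
Lemma ipS x y : X x -> X y -> ip y x = conjc (ip x y).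
Proof. by case: hPH => _ _ _ h _; apply: h. Qed.
Lemma sq_ge0 x : X x -> 0 <= sq ip x.
Proof. by case: hPH => _ _ _ _ h; apply: h. Qed.
Lemma ip0l z : X z -> ip 0 z = 0.
Proof.
move=> hz; have := ipL 1 X0 X0 hz; rewrite scale1r addr0 mul1r => h.
by apply: (addIr (ip 0 z)); rewrite add0r -h.
Qed.
Lemma ipDl x y z : X x -> X y -> X z -> ip (x + y) z = ip x z + ip y z.
Proof. by move=> hx hy hz; have := ipL 1 hx hy hz; rewrite scale1r mul1r. Qed.
Lemma ipZl a x z : X x -> X z -> ip (a *: x) z = a * ip x z.
Proof. by move=> hx hz; have := ipL a hx X0 hz; rewrite addr0 ip0l // addr0. Qed.
Lemma ipNl x z : X x -> X z -> ip (- x) z = - ip x z.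
Proof. by move=> hx hz; rewrite -scaleN1r ipZl // mulN1r. Qed.
Lemma ipBl x y z : X x -> X y -> X z -> ip (x - y) z = ip x z - ip y z.
Proof. by move=> hx hy hz; rewrite ipDl ?ipNl //; apply: XN. Qed.
Lemma ipDr x y z : X x -> X y -> X z -> ip z (x + y) = ip z x + ip z y.
Proof.
move=> hx hy hz; rewrite ipS ?ipDl ?conjcD -?ipS //; exact: XD.
Qed.
Lemma ipZr a x z : X x -> X z -> ip z (a *: x) = conjc a * ip z x.
Proof. move=> hx hz; rewrite ipS ?ipZl ?conjcM -?ipS //; exact: XZ. Qed.
Lemma ipNr x z : X x -> X z -> ip z (- x) = - ip z x.
Proof. move=> hx hz; rewrite ipS ?ipNl ?conjcN -?ipS //; exact: XN. Qed.
Lemma ipBr x y z : X x -> X y -> X z -> ip z (x - y) = ip z x - ip z y.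
Proof. by move=> hx hy hz; rewrite ipDr ?ipNr //; apply: XN. Qed.
Lemma ip0r z : X z -> ip z 0 = 0.
Proof. by move=> hz; rewrite ipS ?ip0l ?conjc0' //; exact: X0. Qed.
Lemma Im_ipxx x : X x -> cIm (ip x x) = 0.
Proof. by move=> hx; have := congr1 (@complex.Im R) (ipS hx hx); rewrite ImJ; lra. Qed.
Lemma Re_ipS x y : X x -> X y -> cRe (ip y x) = cRe (ip x y).
Proof. by move=> hx hy; rewrite ipS // ReJ. Qed.
Lemma sqD x y : X x -> X y -> sq ip (x + y) = sq ip x + sq ip y + 2 * cRe (ip x y).
Proof.
move=> hx hy; rewrite /sq ipDl ?ipDr //; try exact: XD.
cs; rewrite (Re_ipS hx hy); lra.
Qed.
Lemma sqZ (t : R) x y : X x -> X y ->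
  sq ip ((t%:C)%C *: x + y) = t ^+ 2 * sq ip x + 2 * t * cRe (ip x y) + sq ip y.
Proof.
move=> hx hy; have hxy := XL (t%:C)%C hx hy.
rewrite /sq ipL // !ipDr ?ipZr //; try exact: XZ.
cs; rewrite (Re_ipS hx hy) (Im_ipxx hx); ring.
Qed.
Lemma CS x y : X x -> X y -> cRe (ip x y) ^+ 2 <= sq ip x * sq ip y.
Proof.
move=> hx hy; rewrite mulrC; apply: quad; try exact: sq_ge0.
move=> t; rewrite -(Re_ipS hx hy) -sqZ //; apply: sq_ge0; exact: XL.
Qed.
Lemma Im_ip x y : X x -> X y -> cIm (ip x y) = cRe (ip x ('i%C *: y)).
Proof. move=> hx hy; rewrite ipZr //; cs; lra. Qed.
Lemma lim0 (z : nat -> V) w c : (forall n, X (z n)) -> X w ->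
  (forall e, 0 < e -> exists n, sq ip (z n) < e) -> (forall n, ip (z n) w = c) -> c = 0.
Proof.
move=> hz hw hs hc.
have gen : forall w', X w' -> (forall n, cRe (ip (z n) w') = cRe (ip (z 0%N) w')) -> cRe (ip (z 0%N) w') = 0.
  move=> w' hw' hcst; apply: (@small_sq _ _ (sq ip w')); first exact: sq_ge0.
  move=> e he; have [n hn] := hs e he.
  rewrite -(hcst n); apply: (le_trans (CS (hz n) hw')).
  apply: ler_wpM2r; [exact: sq_ge0 | exact: ltW].
have hw' : X ('i%C *: w) by apply: XZ.
apply: cE.
  rewrite -(hc 0%N) Re0; apply: gen => // n; by rewrite !hc.
rewrite -(hc 0%N) Im0 Im_ip //; apply: gen => // n; by rewrite -!Im_ip // !hc.
Qed.
Lemma uniq0 z : Defn ip X -> X z -> (forall v, X v -> ip z v = 0) -> z = 0.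
Proof. by move=> hD hz h; apply: hD => //; rewrite h // Re0. Qed.
Hypothesis hC : Compl ip X.

Lemma sqN x : X x -> sq ip (- x) = sq ip x.
Proof. by move=> hx; rewrite /sq ipNl ?ipNr ?opprK //; apply: XN. Qed.

Lemma para a b : X a -> X b -> sq ip (a + b) + sq ip (a - b) = 2 * sq ip a + 2 * sq ip b.
Proof.
move=> ha hb; have hnb := XN hb.
rewrite !sqD // sqN // ipNr // ReN; lra.
Qed.

Lemma sq2 w : X w -> sq ip ((2%:C)%C *: w) = 4 * sq ip w.
Proof.
move=> hw; have := sqZ 2 hw X0; rewrite addr0 ip0r // ReC.
rewrite /sq => ->; rewrite (ip0r X0) Re0; lra.
Qed.

Lemma proj (M : set V) : (forall x, M x -> X x) -> M 0 ->
  (forall a x y, M x -> M y -> M (a *: x + y)) ->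
  (forall u x, (forall n, M (u n)) -> X x -> cvg_to ip u x -> M x) ->
  forall x, X x -> exists p, M p /\ forall s, M s -> ip (x - p) s = 0.
Proof.
move=> hMX hM0 hML hMc x hx.
have hMZ : forall a y, M y -> M (a *: y) by move=> a y hy; have := hML a y 0 hy hM0; rewrite addr0.
have hMD : forall y z, M y -> M z -> M (y + z) by move=> y z hy hz; have := hML 1 y z hy hz; rewrite scale1r.
pose E := [set r | exists m, M m /\ r = sq ip (x - m)].
have hE0 : E (sq ip x) by exists 0; split => //; rewrite subr0.
have hlb0 : lbound E 0 by move=> r [m [hm ->]]; apply: sq_ge0 => //; apply: XB => //; exact: hMX.
have hlb : has_lbound E by exists 0.
have hinf : has_inf E by split => //; exists (sq ip x).
set d := inf E.
have d0 : 0 <= d by apply: lb_le_inf => //; exists (sq ip x).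
have dle : forall m, M m -> d <= sq ip (x - m).
  by move=> m hm; apply: ge_inf => //; exists m.
have adh : forall n : nat, exists m, M m /\ sq ip (x - m) < d + ieps R n.
  move=> n; have [r [m [hm ->]] hr] := inf_adherent (inv_gt0 R n) hinf.
  by exists m.
pose ms n := proj1_sig (ClassicalEpsilon.constructive_indefinite_description _ (adh n)).
have hms : forall n, M (ms n) /\ sq ip (x - ms n) < d + ieps R n.
  by move=> n; rewrite /ms; case: (ClassicalEpsilon.constructive_indefinite_description _ _).
have hmsX : forall n, X (ms n) by move=> n; apply: hMX; case: (hms n).
have key : forall n k, sq ip (ms k - ms n) <= 2 * ieps R n + 2 * ieps R k.
  move=> n k.
  have ha : X (x - ms n) by apply: XB.
  have hb : X (x - ms k) by apply: XB.
  pose mid := ((2^-1)%:C)%C *: (ms n + ms k).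
  have hM2 : M mid by apply: hMZ; apply: hMD; [case: (hms n)|case: (hms k)].
  have hmid : (x - ms n) + (x - ms k) = (2%:C)%C *: (x - mid) by rewrite /mid two_mid.
  have := para ha hb; rewrite hmid sq2; last by apply: XB => //; apply: hMX.
  have -> : x - ms n - (x - ms k) = ms k - ms n by rewrite opprB addrC addrA subrK.
  have h1 := dle mid hM2.
  move=> h2.
  have [_ h3] := hms n; have [_ h4] := hms k.
  lra.
have cau : cauchy_seq ip ms.
  apply/cauchyE => e he.
  have [N hN] := @ltr_add_invr R 0 (e / 4) (divr_gt0 he (ltr0n _ 4)).
  have {}hN : ieps R N < e / 4 by move: hN; rewrite add0r.
  exists N => n m hn hm.
  apply: (le_lt_trans (key m n)).
  have := inv_le R hn; have := inv_le R hm; lra.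
have [p [hp cvp]] := hC hmsX cau.
have hMp : M p by apply: (hMc ms) => // n; case: (hms n).
have hxp : X (x - p) by apply: XB.
have sqd : sq ip (x - p) <= d.
  apply/ler_addgt0Pr => e he.
  have he4 : 0 < e / 4 by apply: divr_gt0 => //; rewrite ltr0n.
  have [N1 hN1] := @ltr_add_invr R 0 (e / 4) he4.
  have {}hN1 : ieps R N1 < e / 4 by move: hN1; rewrite add0r.
  have hd1 : 0 < d + 1 by lra.
  have [N2 hN2] := proj1 (cvgE ip ms p) cvp (e / 4) he4.
  have [N3 hN3] := proj1 (cvgE ip ms p) cvp ((e / 4) ^+ 2 / (d + 1)) (divr_gt0 (exprn_gt0 2 he4) hd1).
  pose n := (N1 + N2 + N3)%N.
  have n1 : (N1 <= n)%N by rewrite /n; lia.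
  have n2 : (N2 <= n)%N by rewrite /n; lia.
  have n3 : (N3 <= n)%N by rewrite /n; lia.
  have ha : X (x - ms n) by apply: XB.
  have hb : X (ms n - p) by apply: XB.
  have -> : x - p = (x - ms n) + (ms n - p) by rewrite addrA subrK.
  rewrite sqD //.
  have hcs := CS ha hb.
  have sa0 := sq_ge0 ha; have sb0 := sq_ge0 hb.
  have [_ hsa] := hms n.
  have hi := inv_le R n1.
  have hi1 := inv_le1 R n.
  have hsb := hN2 n n2.
  have hsb2 := hN3 n n3.
  rewrite ltr_pdivlMr // in hsb2.
  set r := cRe (ip (x - ms n) (ms n - p)) in hcs *.
  set sa := sq ip (x - ms n) in hcs sa0 hsa *.
  set sb := sq ip (ms n - p) in hcs sb0 hsb hsb2 *.
  have hr : r ^+ 2 < (e / 4) ^+ 2 by nra.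
  have hr' : r < e / 4 by nra.
  lra.
exists p; split => // s hs.
have hsX : X s by apply: hMX.
have gen : forall s', M s' -> cRe (ip (x - p) s') = 0.
  move=> s' hs'; have hs'X : X s' by apply: hMX.
  have : (- cRe (ip s' (x - p))) ^+ 2 <= sq ip s' * 0.
    apply: quad => //; first exact: sq_ge0.
    move=> t; have := dle _ (hML (t%:C)%C _ _ hs' hMp).
    have -> : x - ((t%:C)%C *: s' + p) = ((- t)%:C)%C *: s' + (x - p).
      by rewrite rmorphN scaleNr opprD addrCA addrA.
    rewrite sqZ //; lra.
  rewrite mulr0 => h; rewrite -(Re_ipS hxp hs'X).
  apply/eqP; rewrite -oppr_eq0 -sqrf_eq0; apply/eqP/le_anti; rewrite h sqr_ge0 //.
apply: cE; first by rewrite gen.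
by rewrite Im_ip // gen //; apply: hMZ.
Qed.
End Gen.

Section Inst.
Variables (R : realType) (V : lmodType R[i]) (ip : V -> V -> R[i]).
Hypothesis hH : is_hilbert ip.

Lemma hil_ip00 : ip 0 0 = 0.
Proof.
case: hH => [[hl _ _] _]; have := hl 1 0 0 0; rewrite scale1r addr0 mul1r => h.
by apply: (addIr (ip 0 0)); rewrite add0r -h.
Qed.
Lemma hil_PH : PH ip setT.
Proof.
case: hH => [[hl hs hp] _]; split.
- done.
- done.
- by move=> a x y z _ _ _; apply: hl.
- by move=> x y _ _; apply: hs.
move=> x _; case: (x =P 0) => [->|/eqP hx]; first by rewrite hil_ip00 Re0.
exact: ltW (hp x hx).
Qed.
Lemma hil_Defn : Defn ip setT.
Proof.
case: hH => [[hl hs hp] _] x _ h; apply/eqP; apply/negPn/negP => hx.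
by have := hp x hx; rewrite h ltxx.
Qed.
Lemma hil_Compl : Compl ip setT.
Proof. by case: hH => _ hc u _ hu; have [x hx] := hc u hu; exists x. Qed.
End Inst.

Definition ipP (R : realType) (V W : lmodType R[i]) (ipV : V -> V -> R[i]) (ipW : W -> W -> R[i])
  (p q : V * W) : R[i] := ipV p.1 q.1 + ipW p.2 q.2.

Section Prod.
Variables (R : realType) (V W : lmodType R[i]) (ipV : V -> V -> R[i]) (ipW : W -> W -> R[i]).
Hypothesis hV : PH ipV setT.
Hypothesis hW : PH ipW setT.

Lemma sqP_split (p : V * W) : sq (ipP ipV ipW) p = sq ipV p.1 + sq ipW p.2.
Proof. by rewrite /sq /ipP ReD. Qed.

Lemma prod_PH : PH (ipP ipV ipW) setT.
Proof.
split.
- done.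
- done.
- move=> a x y z _ _ _; rewrite /ipP /=.
  rewrite (ipL hV) // (ipL hW) //; ring.
- by move=> x y _ _; rewrite /ipP (ipS hV) // (ipS hW) // conjcD.
- by move=> x _; rewrite -/(sq _ x) sqP_split addr_ge0 // (sq_ge0 hV, sq_ge0 hW).
Qed.
Lemma prod_Defn : Defn ipV setT -> Defn ipW setT -> Defn (ipP ipV ipW) setT.
Proof.
move=> dV dW [x y] _; rewrite -/(sq _ (x, y)) sqP_split /= => h.
have h1 := sq_ge0 hV (x := x) I; have h2 := sq_ge0 hW (x := y) I.
have e1 : sq ipV x = 0 by lra.
have e2 : sq ipW y = 0 by lra.
by rewrite (dV x I e1) (dW y I e2).
Qed.

Lemma cvgP_comp u x y : cvg_to (ipP ipV ipW) u (x, y) ->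
  cvg_to ipV (fun n => (u n).1) x /\ cvg_to ipW (fun n => (u n).2) y.
Proof.
move/cvgE => h; split; apply/cvgE => e he; have [N hN] := h e he; exists N => n hn;
  have := hN n hn; rewrite sqP_split /=;
  have := sq_ge0 hV (x := (u n).1 - x) I; have := sq_ge0 hW (x := (u n).2 - y) I; lra.
Qed.
Lemma cvgP_pair u x y : cvg_to ipV (fun n => (u n).1) x -> cvg_to ipW (fun n => (u n).2) y ->
  cvg_to (ipP ipV ipW) u (x, y).
Proof.
move=> /cvgE h1 /cvgE h2; apply/cvgE => e he.
have he2 : 0 < e / 2 by apply: divr_gt0 => //; rewrite ltr0n.
have [N1 hN1] := h1 _ he2; have [N2 hN2] := h2 _ he2.
exists (N1 + N2)%N => n hn; rewrite sqP_split /=.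
have := hN1 n ltac:(lia); have := hN2 n ltac:(lia); lra.
Qed.
Lemma cauchyP_comp u : cauchy_seq (ipP ipV ipW) u ->
  cauchy_seq ipV (fun n => (u n).1) /\ cauchy_seq ipW (fun n => (u n).2).
Proof.
move/cauchyE => h; split; apply/cauchyE => e he; have [N hN] := h e he; exists N => n m hn hm;
  have := hN n m hn hm; rewrite sqP_split /=;
  have := sq_ge0 hV (x := (u n).1 - (u m).1) I; have := sq_ge0 hW (x := (u n).2 - (u m).2) I; lra.
Qed.
Lemma prod_Compl : Compl ipV setT -> Compl ipW setT -> Compl (ipP ipV ipW) setT.
Proof.
move=> cV cW u _ hu; have [h1 h2] := cauchyP_comp hu.
have [x [_ hx]] := cV _ (fun _ => I) h1; have [y [_ hy]] := cW _ (fun _ => I) h2.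
by exists (x, y); split => //; apply: cvgP_pair.
Qed.
End Prod.

Lemma cvg_ext (R : realType) (V : lmodType R[i]) (ip : V -> V -> R[i]) u v x :
  (forall n, u n = v n) -> cvg_to ip u x -> cvg_to ip v x.
Proof. by move=> e h eps he; have [N hN] := h eps he; exists N => n hn; rewrite -e; apply: hN. Qed.

Section Graph.
Variables (R : realType) (V W : lmodType R[i]) (ipV : V -> V -> R[i]) (ipW : W -> W -> R[i]).
Hypothesis hV : PH ipV setT.
Hypothesis hW : PH ipW setT.
Hypothesis dV : Defn ipV setT.
Hypothesis dW : Defn ipW setT.
Hypothesis cV : Compl ipV setT.
Hypothesis cW : Compl ipW setT.
Variables (domA : set V) (A : V -> W).
Hypothesis linA : linear_op domA A.
Hypothesis clA : closed_op ipV ipW domA A.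

Lemma dA0 : domA 0. Proof. by case: linA. Qed.
Lemma dAL a x y : domA x -> domA y -> domA (a *: x + y).
Proof. by case: linA => _ h hx hy; case: (h a x y hx hy). Qed.
Lemma AL a x y : domA x -> domA y -> A (a *: x + y) = a *: A x + A y.
Proof. by case: linA => _ h hx hy; case: (h a x y hx hy). Qed.
Lemma A0 : A 0 = 0.
Proof.
have := AL 1 dA0 dA0; rewrite !scale1r addr0 => h.
by apply: (addIr (A 0)); rewrite add0r -h.
Qed.
Lemma AZ a x : domA x -> A (a *: x) = a *: A x.
Proof. by move=> hx; have := AL a hx dA0; rewrite !addr0 A0 addr0. Qed.
Lemma AD x y : domA x -> domA y -> A (x + y) = A x + A y.
Proof. by move=> hx hy; have := AL 1 hx hy; rewrite !scale1r. Qed.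
Lemma dAZ a x : domA x -> domA (a *: x).
Proof. by move=> hx; have := dAL a hx dA0; rewrite addr0. Qed.
Lemma dAD x y : domA x -> domA y -> domA (x + y).
Proof. by move=> hx hy; have := dAL 1 hx hy; rewrite scale1r. Qed.
Lemma dAN x : domA x -> domA (- x).
Proof. by move=> hx; rewrite -scaleN1r; apply: dAZ. Qed.
Lemma dAB x y : domA x -> domA y -> domA (x - y).
Proof. by move=> hx hy; apply: dAD => //; apply: dAN. Qed.
Lemma AN x : domA x -> A (- x) = - A x.
Proof. by move=> hx; rewrite -scaleN1r AZ // scaleN1r. Qed.
Lemma AB x y : domA x -> domA y -> A (x - y) = A x - A y.
Proof. by move=> hx hy; rewrite AD ?AN //; apply: dAN. Qed.

Lemma graph_PH : PH (graph_ip ipV ipW A) domA.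
Proof.
split.
- exact: dA0.
- by move=> a x y hx hy; apply: dAL.
- move=> a x y z hx hy hz; rewrite /graph_ip AL // (ipL hV) // (ipL hW) //; ring.
- by move=> x y _ _; rewrite /graph_ip (ipS hV) // (ipS hW) // conjcD.
- move=> x _; rewrite /graph_ip ReD; apply: addr_ge0; [exact: (sq_ge0 hV) | exact: (sq_ge0 hW)].
Qed.
Lemma graph_Defn : Defn (graph_ip ipV ipW A) domA.
Proof.
move=> x hx; rewrite /graph_ip ReD => h.
have h1 := sq_ge0 hV (x := x) I; have h2 := sq_ge0 hW (x := A x) I.
by apply: dV => //; rewrite /sq in h1 h2; lra.
Qed.
Lemma graph_sqE x y : domA x -> domA y ->
  sq (graph_ip ipV ipW A) (x - y) = sq (ipP ipV ipW) ((x, A x) - (y, A y)).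
Proof. by move=> hx hy; rewrite /sq /graph_ip /ipP /= AB. Qed.
Lemma graph_cvg u x : (forall n, domA (u n)) -> domA x ->
  cvg_to (graph_ip ipV ipW A) u x <-> cvg_to (ipP ipV ipW) (fun n => (u n, A (u n))) (x, A x).
Proof.
move=> hu hx; rewrite !cvgE; split => h e he; have [N hN] := h e he; exists N => n hn.
  by rewrite -graph_sqE //; apply: hN.
by rewrite graph_sqE //; apply: hN.
Qed.
Lemma graph_Compl : Compl (graph_ip ipV ipW A) domA.
Proof.
move=> u hu /cauchyE hc.
have hc' : cauchy_seq (ipP ipV ipW) (fun n => (u n, A (u n))).
  apply/cauchyE => e he; have [N hN] := hc e he; exists N => n m hn hm.
  by rewrite -graph_sqE //; apply: hN.
have [[x y] [_ hxy]] := prod_Compl hV hW cV cW (fun _ => I) hc'.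
have [h1 h2] := cvgP_comp hV hW hxy.
have [hx hAx] := clA hu h1 h2.
exists x; split => //; apply/graph_cvg => //; by rewrite hAx.
Qed.

Lemma GG x y : (forall w z, adjoint_graph ipV ipW domA A (w, z) -> ipW y w = ipV x z) ->
  domA x /\ A x = y.
Proof.
move=> hyp.
have hP := prod_PH hV hW; have cP := prod_Compl hV hW cV cW.
pose M := [set p : V * W | domA p.1 /\ p.2 = A p.1].
have hM0 : M 0 by split; [exact: dA0 | rewrite /= A0].
have hML : forall a p q, M p -> M q -> M (a *: p + q).
  move=> a [p1 p2] [q1 q2] [/= h1 ->] [/= h2 ->]; split => /=; first exact: dAL.
  by rewrite AL.
have hMc : forall u x, (forall n, M (u n)) -> setT x -> cvg_to (ipP ipV ipW) u x -> M x.
  move=> u [x1 x2] hu _ /(cvgP_comp hV hW) [h1 h2].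
  have h2' : cvg_to ipW (fun n => A (u n).1) x2.
    by apply: (cvg_ext _ h2) => n; case: (hu n).
  have [hx1 hA] := clA (fun n => proj1 (hu n)) h1 h2'.
  by split.
have [[u v] [[/= hu ->] horth]] := proj hP cP (fun _ _ => I) hM0 hML hMc (x := (x, y)) I.
have hadj : adjoint_graph ipV ipW domA A (y - A u, u - x).
  move=> w hw /=.
  have := horth (w, A w) (conj hw erefl); rewrite /ipP /=.
  move/(congr1 conjc); rewrite conjcD -(ipS hV) // -(ipS hW) // conjc0' => h.
  rewrite -[u - x]opprB (ipNr hV) //; apply/eqP; rewrite -addr_eq0 addrC; apply/eqP.
  exact: h.
have e1 := hyp _ _ hadj.
have e2 := hadj u hu.
have e3 : ipW (y - A u) (y - A u) = - ipV (x - u) (x - u).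
  by rewrite (ipBl hW) // e1 e2 -(ipBl hV) // -[u - x]opprB (ipNr hV).
have s1 := sq_ge0 hV (x := x - u) I; have s2 := sq_ge0 hW (x := y - A u) I.
have z1 : sq ipW (y - A u) = 0 by move: s1 s2; rewrite /sq e3 ReN; lra.
have z2 : sq ipV (x - u) = 0 by move: s1 s2; rewrite /sq e3 ReN; lra.
have := dW I z1; have := dV I z2; move/eqP; rewrite subr_eq0 => /eqP ->; move/eqP; rewrite subr_eq0 => /eqP ->.
by split.
Qed.
End Graph.

Section Main.
Variables (R : realType) (H0 H1 : lmodType R[i])
    (ip0 : H0 -> H0 -> R[i]) (ip1 : H1 -> H1 -> R[i]).
Hypotheses (hH0 : is_hilbert ip0) (hH1 : is_hilbert ip1).
Variables (domG : set H0) (G : H0 -> H1) (domD : set H1) (D : H1 -> H0).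
Hypotheses (linG : linear_op domG G) (closedG : closed_op ip0 ip1 domG G)
    (linD : linear_op domD D) (closedD : closed_op ip1 ip0 domD D).
Hypothesis GstarD : forall (y : H1) (z : H0), adjoint_graph ip0 ip1 domG G (y, z) ->
                domD y /\ D y = - z.

Let hP0 := hil_PH hH0.
Let hP1 := hil_PH hH1.
Let d0 := hil_Defn hH0.
Let d1 := hil_Defn hH1.
Let c0 := hil_Compl hH0.
Let c1 := hil_Compl hH1.
Let hPG := graph_PH hP0 hP1 linG.
Let hPD := graph_PH hP1 hP0 linD.

Lemma DstarG w z : adjoint_graph ip1 ip0 domD D (w, z) -> domG w /\ G w = - z.
Proof.
move=> hadj; apply: (GG hP0 hP1 d0 d1 c0 c1 linG closedG) => w' z' hw' /=.
have [hDw' eD] := GstarD hw'.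
have e := hadj w' hDw'; rewrite eD in e.
by rewrite (ipNl hP1) // (ipS hP1 (x := w')) // -e -(ipS hP0) // (ipNr hP0) // opprK.
Qed.

Lemma DB q : BDD ip0 ip1 domG G domD D q ->
  [/\ domG (D q), G (D q) = q & BDG ip0 ip1 domG G domD D (D q)].
Proof.
move=> [hq hBq].
have [hDq hGDq] : domG (D q) /\ G (D q) = q.
  apply: (GG hP0 hP1 d0 d1 c0 c1 linG closedG) => w z hwz.
  have [hDw eD] := GstarD hwz.
  have := hBq w (ex_intro _ z hwz); rewrite /graph_ip eD (ipNr hP0) //.
  by move/eqP; rewrite subr_eq0 => /eqP.
split => //; split => // w [z hwz].
have [hGw eG] := DstarG hwz.
rewrite /graph_ip hGDq eG (ipNr hP1) // (hwz q hq) subrr //.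
Qed.

Lemma orth_adj q : domD q -> (forall s, BDD ip0 ip1 domG G domD D s -> graph_ip ip1 ip0 D q s = 0) ->
  adjoint_dom ip0 ip1 domG G q.
Proof.
move=> hq horth.
have cD := graph_Compl hP1 hP0 c1 c0 linD closedD.
have dD : Defn (graph_ip ip1 ip0 D) domD := @graph_Defn _ _ _ _ _ hP1 hP0 d1 domD D.
pose M := adjoint_dom ip0 ip1 domG G.
have hMX : forall w, M w -> domD w by move=> w [z hz]; case: (GstarD hz).
have hM0 : M 0 by exists 0 => x hx; rewrite (ip0r hP1) // (ip0r hP0).
have hML : forall a x y, M x -> M y -> M (a *: x + y).
  move=> a x y [z1 h1] [z2 h2]; exists (a *: z1 + z2) => w hw.
  by rewrite (ipDr hP1) // (ipZr hP1) // (ipDr hP0) // (ipZr hP0) // h1 // h2.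
have hMc : forall u w, (forall n, M (u n)) -> domD w -> cvg_to (graph_ip ip1 ip0 D) u w -> M w.
  move=> u w hu hw /cvgE hcv; exists (- D w) => x hx.
  have hPP := prod_PH hP1 hP0.
  pose zz n := (u n - w, D (u n) - D w).
  have hun : forall n, domD (u n) by move=> n; apply: hMX.
  set c := ip1 (G x) w + ip0 x (D w).
  have hc : forall n, ipP ip1 ip0 (zz n) (G x, x) = conjc (- c).
    move=> n; have [zn hzn] := hu n; have [_ eD] := GstarD hzn.
    have e := hzn x hx.
    rewrite /ipP /zz /= (ipBl hP1) // (ipBl hP0) // eD (ipNl hP0) // (ipS hP0 (x := x)) //.
    move: e => /= e.
    rewrite (ipS hP1 (x := G x) (y := u n)) // e /c conjcN conjcD.
    rewrite (ipS hP1 (x := G x) (y := w)) // (ipS hP0 (x := x) (y := D w)) //; ring.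
  have := lim0 hPP (z := zz) (w := (G x, x)) (c := conjc (- c)) (fun _ => I) I.
  move=> /(_ _ hc) h0.
  have : conjc (- c) = 0.
    apply: h0 => e he; have [N hN] := hcv e he; exists N.
    by have := hN N (leqnn N); rewrite (@graph_sqE _ _ _ ip1 ip0 _ _ linD _ _ (hun N) hw).
  move/conjc_eq0'/eqP; rewrite oppr_eq0 /c addr_eq0 => /eqP ->.
  by rewrite (ipNr hP0).
have [r0 [hr0 hor]] := proj hPD cD hMX hM0 hML hMc hq.
have hr0D := hMX _ hr0.
have hqr : domD (q - r0) by apply: (dAB linD).
have hB : BDD ip0 ip1 domG G domD D (q - r0) by split => // w hw; apply: hor.
have e1 := horth _ hB.
have e2 : graph_ip ip1 ip0 D r0 (q - r0) = 0.
  by rewrite (ipS hPD hqr hr0D) hor // conjc0'.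
have : graph_ip ip1 ip0 D (q - r0) (q - r0) = 0 by rewrite (ipBl hPD) // e1 e2 subrr.
move=> e3; have := dD _ hqr; rewrite e3 Re0 => /(_ erefl) /eqP; rewrite subr_eq0 => /eqP ->.
exact: hr0.
Qed.

Lemma projBDG v : domG v -> exists p, is_orth_proj (graph_ip ip0 ip1 G) (BDG ip0 ip1 domG G domD D) v p.
Proof.
move=> hv.
have cG := graph_Compl hP0 hP1 c0 c1 linG closedG.
pose M := BDG ip0 ip1 domG G domD D.
have hMX : forall w, M w -> domG w by move=> w [].
have hM0 : M 0.
  split; first exact: (dA0 linG).
  move=> w [z hz]; have [hw _] := DstarG hz; exact: (ip0l hPG).
have hML : forall a x y, M x -> M y -> M (a *: x + y).
  move=> a x y [hx h1] [hy h2]; split; first exact: (dAL linG).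
  move=> w hw; have [z hz] := hw; have [hGw _] := DstarG hz.
  by rewrite (ipL hPG) // h1 // h2 // mulr0 addr0.
have hMc : forall u w, (forall n, M (u n)) -> domG w -> cvg_to (graph_ip ip0 ip1 G) u w -> M w.
  move=> u w hu hw /cvgE hcv; split => // w' hw'.
  have [z hz] := hw'; have [hGw' _] := DstarG hz.
  have hun : forall n, domG (u n) by move=> n; case: (hu n).
  have := lim0 hPG (z := fun n => u n - w) (w := w') (c := - graph_ip ip0 ip1 G w w').
  move=> /(_ (fun n => dAB linG (hun n) hw) hGw') h0.
  apply/eqP; rewrite -oppr_eq0; apply/eqP; apply: h0.
    move=> e he; have [N hN] := hcv e he; exists N; exact: hN.
  move=> n; rewrite (ipBl hPG) //; have [_ h] := hu n; by rewrite h // add0r.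
have [p [hp hor]] := proj hPG cG hMX hM0 hML hMc hv.
by exists p; split.
Qed.

Variables (m : H0 -> H0) (mst : H0 -> H0) (a : H1 -> H1) (ast : H1 -> H1).
Hypotheses (bm : bounded_op ip0 m) (hmst : forall x y : H0, ip0 (m x) y = ip0 x (mst y))
    (ba : bounded_op ip1 a) (hast : forall x y : H1, ip1 (a x) y = ip1 x (ast y)).
Variables (T : H0 -> H0).
Hypotheses (T_dom : forall u, domG u -> domG (T u))
    (T_def : forall u v, domG u -> domG v ->
       graph_ip ip0 ip1 G (T u) v = ip1 (a (G u)) (G v) + ip0 (m u) v)
    (T_closed_range : forall (u : nat -> H0) (w : H0),
       (forall n, domG (u n)) -> domG w ->
       cvg_to (graph_ip ip0 ip1 G) (fun n => T (u n)) w ->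
       exists u0 : H0, domG u0 /\ T u0 = w).

Let dG : Defn (graph_ip ip0 ip1 G) domG := @graph_Defn _ _ _ _ _ hP0 hP1 d0 domG G.

Lemma Tlin al u u' : domG u -> domG u' -> T (al *: u + u') = al *: T u + T u'.
Proof.
move=> hu hu'.
have hd : domG (al *: u + u') := dAL linG al hu hu'.
have hTu := T_dom hu; have hTu' := T_dom hu'; have hTd := T_dom hd.
have hr : domG (al *: T u + T u') := dAL linG al hTu hTu'.
apply/eqP; rewrite -subr_eq0; apply/eqP; apply: (uniq0 dG); first exact: (dAB linG).
move=> v hv; rewrite (ipBl hPG) // (ipL hPG) // !T_def // (AL linG) //.
case: ba => la _; case: bm => lm _.
rewrite la lm (ipL hP1) // (ipL hP0) //; ring.
Qed.

Lemma T0 : T 0 = 0.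
Proof.
have h0 := dA0 linG.
have := Tlin 1 h0 h0; rewrite !scale1r addr0 => h.
by apply: (addIr (T 0)); rewrite add0r -h.
Qed.

Lemma projRan y : domG y -> exists u, domG u /\
  forall u', domG u' -> graph_ip ip0 ip1 G (y - T u) (T u') = 0.
Proof.
move=> hy.
have cG := graph_Compl hP0 hP1 c0 c1 linG closedG.
pose M := [set w | exists u, domG u /\ T u = w].
have hMX : forall w, M w -> domG w by move=> w [u [hu <-]]; apply: T_dom.
have hM0 : M 0 by exists 0; split; [exact: (dA0 linG) | exact: T0].
have hML : forall al x y, M x -> M y -> M (al *: x + y).
  move=> al x y' [u [hu <-]] [u' [hu' <-]]; exists (al *: u + u'); split; first exact: (dAL linG).
  exact: Tlin.
have hMc : forall u w, (forall n, M (u n)) -> domG w -> cvg_to (graph_ip ip0 ip1 G) u w -> M w.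
  move=> u w hu hw hcv.
  pose us n := proj1_sig (ClassicalEpsilon.constructive_indefinite_description _ (hu n)).
  have hus : forall n, domG (us n) /\ T (us n) = u n.
    by move=> n; rewrite /us; case: (ClassicalEpsilon.constructive_indefinite_description _ _).
  have [u0 [hu0 e]] := T_closed_range (fun n => proj1 (hus n)) hw
     (cvg_ext (fun n => esym (proj2 (hus n))) hcv).
  by exists u0.
have [py [[u [hu <-]] hor]] := proj hPG cG hMX hM0 hML hMc hy.
exists u; split => // u' hu'; apply: hor; by exists u'.
Qed.

Theorem main_thm :
  dom_inv (DtN_graph ip0 ip1 domG G domD D a m) =
  [set q0 | BDD ip0 ip1 domG G domD D q0 /\
     forall v p : H0, ker_mstar ip0 ip1 domG G ast mst v ->
       is_orth_proj (graph_ip ip0 ip1 G) (BDG ip0 ip1 domG G domD D) v p ->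
       graph_ip ip0 ip1 G (D q0) p = 0].
Proof.
case: ba => la _; case: bm => lm _.
apply/seteqP; split => q /=.
- move=> [p [u [hu haGu hmu [hBp hp] [hBq hq]]]] /=.
  split => // v p' hv [hBp' hp'].
  have [hDq hGDq hBDq] := DB hBq.
  have hv' : domG v by case: hv.
  have hp'G : domG p' by case: hBp'.
  have e1 : graph_ip ip0 ip1 G (D q) p' = graph_ip ip0 ip1 G (D q) v.
    have := hp' (D q) hBDq; move/(congr1 conjc); rewrite -(ipS hPG) ?conjc0' //; last exact: (dAB linG).
    rewrite (ipBr hPG) //; move/eqP; rewrite subr_eq0 => /eqP ->//.
  rewrite e1 /graph_ip hGDq.
  have hqD : domD q by case: hBq.
  set qo := a (G u) - q.
  have hqo : domD qo by apply: (dAB linD).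
  have [z hz] := orth_adj hqo hq.
  have [_ eDqo] := GstarD hz.
  have ez := hz v hv'.
  have [_ [z' [hz' emst]]] := hv.
  have ez' := hz' u hu.
  have hDq' : D q = m u + z.
    have : D qo = D (a (G u)) - D q by rewrite /qo (AB linD).
    rewrite eDqo; move/eqP: hmu; rewrite subr_eq0 => /eqP <- => h.
    by rewrite -[z]opprK h opprB addrC subrK.
  have hqq : q = a (G u) - qo by rewrite /qo opprB addrC subrK.
  rewrite hDq' hqq (ipDl hP0) // (ipBl hP1) //.
  rewrite (ipS hP1 (x := G v) (y := qo)) // ez hmst emst (ipNr hP0) // hast ez'.
  rewrite -(ipS hP0) //; ring.
- rename q into q0; move=> [hBq0 hyp].
  have [hDq hGDq hBDq] := DB hBq0.
  set y := D q0 in hDq hGDq hBDq *.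
  have [u [hu hor]] := projRan hDq.
  have hTu := T_dom hu.
  set z := y - T u.
  have hz : domG z by apply: (dAB linG).
  have hker : ker_mstar ip0 ip1 domG G ast mst z.
    split => //; exists (- mst z); split; last by rewrite opprK.
    move=> x hx /=.
    have := hor x hx; move/(congr1 conjc); rewrite -(ipS hPG) ?conjc0' //; last exact: T_dom.
    rewrite T_def // hast hmst => /eqP; rewrite addr_eq0 => /eqP ->.
    by rewrite (ipNr hP0).
  have [p' [hBp' hp']] := projBDG hz.
  have hp'G : domG p' by case: hBp'.
  have e0 := hyp z p' hker (conj hBp' hp').
  have e1 : graph_ip ip0 ip1 G y z = 0.
    have := hp' y hBDq; move/(congr1 conjc); rewrite -(ipS hPG) ?conjc0' //; last exact: (dAB linG).
    by rewrite (ipBr hPG) // e0 subr0.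
  have e2 : graph_ip ip0 ip1 G (T u) z = 0.
    by rewrite (ipS hPG hz hTu) hor // conjc0'.
  have ez : z = 0.
    apply: (dG hz); by rewrite {1}/z (ipBl hPG) // e1 e2 subrr Re0.
  have hTy : T u = y by apply/eqP; rewrite eq_sym -subr_eq0; apply/eqP.
  have E : forall v, domG v -> ip1 (a (G u)) (G v) + ip0 (m u) v = ip0 y v + ip1 q0 (G v).
    by move=> v hv; rewrite -T_def // hTy /graph_ip hGDq.
  have [haGu eDa] : domD (a (G u)) /\ D (a (G u)) = m u.
    apply: (GG hP1 hP0 d1 d0 c1 c0 linD closedD) => w zz hwz /=.
    have [hGw eGw] := DstarG hwz.
    have := E w hGw; have [_ hB] := hBDq; have := hB w (ex_intro _ zz hwz).
    rewrite /graph_ip hGDq eGw => ->.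
    by rewrite !(ipNr hP1) // addrC => /eqP; rewrite subr_eq0 => /eqP.
  have [pp hpp] := projBDG hu.
  exists pp; exists u; split => //.
    by rewrite eDa subrr.
  have hq0D : domD q0 by case: hBq0.
  split => // s hs.
  set qo := a (G u) - q0.
  have hqo : domD qo by apply: (dAB linD).
  have hsD : domD s by case: hs.
  have hadj : adjoint_graph ip0 ip1 domG G (qo, y - m u).
    move=> x hx /=.
    rewrite (ipS hP1 (x := qo)) // (ipBl hP1) // (ipS hP0 (x := y - m u)) // (ipBl hP0) //.
    congr conjc; apply/eqP; rewrite subr_eq addrAC -(E x hx) addrK //.
  have [_ hs2] := hs.
  have := hs2 qo (ex_intro _ (y - m u) hadj).
  by rewrite (ipS hPD hqo hsD) => /conjc_eq0'.
Qed.

End Main.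

Unset Implicit Arguments.
Set Strict Implicit.

Theorem proposition5p7 (R : realType) (H0 H1 : lmodType R[i])
    (ip0 : H0 -> H0 -> R[i]) (ip1 : H1 -> H1 -> R[i])
    (hH0 : is_hilbert ip0) (hH1 : is_hilbert ip1)
    (domG : set H0) (G : H0 -> H1) (domD : set H1) (D : H1 -> H0)
    (linG : linear_op domG G) (denseG : densely_defined ip0 domG)
    (closedG : closed_op ip0 ip1 domG G)
    (linD : linear_op domD D) (denseD : densely_defined ip1 domD)
    (closedD : closed_op ip1 ip0 domD D)
    (GstarD : forall (y : H1) (z : H0), adjoint_graph ip0 ip1 domG G (y, z) ->
                domD y /\ D y = - z)
    (m : H0 -> H0) (mst : H0 -> H0) (a : H1 -> H1) (ast : H1 -> H1)
    (bm : bounded_op ip0 m) (hmst : forall x y : H0, ip0 (m x) y = ip0 x (mst y))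
    (ba : bounded_op ip1 a) (hast : forall x y : H1, ip1 (a x) y = ip1 x (ast y))
    (coer_a : coercive ip1 a)
    (T : H0 -> H0) (T_dom : forall u, domG u -> domG (T u))
    (T_def : forall u v, domG u -> domG v ->
       graph_ip ip0 ip1 G (T u) v = ip1 (a (G u)) (G v) + ip0 (m u) v)
    (T_closed_range : forall (u : nat -> H0) (w : H0),
       (forall n, domG (u n)) -> domG w ->
       cvg_to (graph_ip ip0 ip1 G) (fun n => T (u n)) w ->
       exists u0 : H0, domG u0 /\ T u0 = w) :
  dom_inv (DtN_graph ip0 ip1 domG G domD D a m) =
  [set q0 | BDD ip0 ip1 domG G domD D q0 /\
     forall v p : H0, ker_mstar ip0 ip1 domG G ast mst v ->
       is_orth_proj (graph_ip ip0 ip1 G) (BDG ip0 ip1 domG G domD D) v p ->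
       graph_ip ip0 ip1 G (D q0) p = 0].
Proof.
intros; eapply main_thm; eassumption.
Qed.
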